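(* For every integer $n\ge 9$, $\mathrm{wdim}_4(K_n\times K_n)\le 2n+1+\lfloor n/4\rfloor$.
   Context: $K_n\times K_n$ is the direct product of two complete graphs on $n$ vertices: vertex set $[n]\times[n]$ with $[n]=\{1,\dots,n\}$, and $(i,j)$ adjacent to $(i',j')$ iff $i\ne i'$ and $j\ne j'$. For a connected graph $G$ with distance $d_G$, vertices $x,y,z$ and $S\subseteq V(G)$, let $\Delta_z(x,y)=|d_G(x,z)-d_G(y,z)|$ and $\Delta_S(x,y)=\sum_{z\in S}\Delta_z(x,y)$. A set $S$ is a weak $k$-resolving set if $\Delta_S(x,y)\ge k$ for all distinct $x,y\in V(G)$, and $\mathrm{wdim}_k(G)$ is the minimum cardinality of a weak $k$-resolving set of $G$. *)

(* Defs.v *)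
From mathcomp Require Import all_boot.
Set Implicit Arguments. Unset Strict Implicit. Unset Printing Implicit Defensive.

Section Graph.
Variable T : finType.
Variable e : rel T.

Fixpoint walkb (k : nat) (x y : T) : bool :=
  if k is k'.+1 then (x == y) || [exists z, e x z && walkb k' z y]
  else x == y.

(* graph distance: least k with a walk of length <= k from x to y.
   For a connected graph this is attained for some k < #|T|; the default
   #|T| is only used for disconnected pairs. *)
Definition gdist (x y : T) : nat :=
  \big[minn/#|T|]_(k < #|T| | walkb k x y) (k : nat).

Definition absdiff (a b : nat) : nat := if a <= b then b - a else a - b.

Definition Delta_z (z x y : T) : nat := absdiff (gdist x z) (gdist y z).

Definition Delta_S (S : {set T}) (x y : T) : nat := \sum_(z in S) Delta_z z x y.

Definition weak_resolving (k : nat) (S : {set T}) : bool :=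
  [forall x, forall y, (x != y) ==> (k <= Delta_S S x y)].

(* minimum cardinality of a weak k-resolving set (default #|T|.+1 if none exists) *)
Definition wdim (k : nat) : nat :=
  \big[minn/#|T|.+1]_(S : {set T} | weak_resolving k S) #|S|.
End Graph.

Definition KnKn_adj (n : nat) : rel ('I_n * 'I_n) :=
  fun x y => (x.1 != y.1) && (x.2 != y.2).

(* Main.v *)
Require Import Defs.
From mathcomp Require Import all_boot zify.
Set Implicit Arguments. Unset Strict Implicit. Unset Printing Implicit Defensive.

Lemma bigmin_le (I : eqType) (r : seq I) (P : pred I) (F : I -> nat) N i0 :
  i0 \in r -> P i0 -> \big[minn/N]_(i <- r | P i) F i <= F i0.
Proof.
elim: r => [//|x r IH]; rewrite inE big_cons => /orP [/eqP <-|Hr] Pi.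
  by rewrite Pi geq_minl.
case: (P x); last exact: IH.
by apply: leq_trans (geq_minr _ _) (IH Hr Pi).
Qed.

Lemma bigmin_ge (I : Type) (r : seq I) (P : pred I) (F : I -> nat) N d :
  d <= N -> (forall i, P i -> d <= F i) -> d <= \big[minn/N]_(i <- r | P i) F i.
Proof.
move=> hN hF; apply: (big_ind (fun x => d <= x)) => //.
  by move=> a b ha hb; rewrite leq_min ha hb.
Qed.

Section G.
Variable n : nat.
Hypothesis hn : 2 < n.
Local Notation T := ('I_n * 'I_n)%type.
Local Notation e := (@KnKn_adj n).

Lemma third (a b : 'I_n) : exists c : 'I_n, (c != a) && (c != b).
Proof.
have h0 : 0 < n by lia. have h1 : 1 < n by lia.
pose c0 := Ordinal h0; pose c1 := Ordinal h1; pose c2 := Ordinal hn.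
case: (boolP ((c0 != a) && (c0 != b))) => [H|]; first by exists c0.
case: (boolP ((c1 != a) && (c1 != b))) => [H|]; first by exists c1.
move=> H1 H0; exists c2.
apply/andP; split; apply/negP => /eqP E; subst.
all: move: H1 H0; rewrite -!val_eqE /=; lia.
Qed.

Lemma walk0 x y : walkb e 0 x y = (x == y).
Proof. by []. Qed.

Lemma walk1 x y : walkb e 1 x y = (x == y) || e x y.
Proof.
rewrite /= ; congr (_ || _); apply/existsP/idP => [[z /andP [h /eqP <-]] //|h].
by exists y; rewrite h eqxx.
Qed.

Lemma walk2 x y : walkb e 2 x y.
Proof.
rewrite /=; case: eqP => // hxy; apply/existsP.
case: (boolP (e x y)) => hxy'.
  by exists y; rewrite hxy' eqxx.
have [a /andP [a1 a2]] := third x.1 y.1.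
have [b /andP [b1 b2]] := third x.2 y.2.
exists (a, b); rewrite /KnKn_adj /= eq_sym a1 eq_sym b1 /=.
by apply/orP; right; apply/existsP; exists y; rewrite /KnKn_adj /= a2 b2 eqxx.
Qed.

Lemma cardT : 2 < #|{: T}|.
Proof. rewrite card_prod card_ord; nia. Qed.

Definition dd (x y : T) : nat := if x == y then 0 else if e x y then 1 else 2.

Lemma gdistE x y : gdist e x y = dd x y.
Proof.
have hc := cardT.
have key : forall d, d < #|{: T}| -> walkb e d x y -> (forall k, k < d -> ~~ walkb e k x y) ->
   gdist e x y = d.
  move=> d hd hw hk; apply/eqP; rewrite eqn_leq; apply/andP; split.
    rewrite /gdist.
    have := @bigmin_le _ (index_enum 'I_#|{: T}|) (fun k : 'I_#|{: T}| => walkb e k x y)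
       (fun k => k : nat) #|{: T}| (Ordinal hd).
    by rewrite mem_index_enum; apply.
  apply: bigmin_ge; first exact: ltnW.
  move=> i hi; rewrite leqNgt; apply/negP => /hk; by rewrite hi.
rewrite /dd; case: (eqVneq x y) => [E|nxy].
  by apply: key => //; [lia | rewrite walk0 E].
case: (boolP (e x y)) => hxy.
  apply: key => //; first lia.
    by rewrite walk1 hxy orbT.
  by move=> k; case: k => // _; exact: nxy.
apply: key => //; first exact: walk2.
move=> [|[|k]] // _.
by rewrite walk1 (negbTE nxy) (negbTE hxy).
Qed.

Definition ddb (A B : bool) : nat := if A && B then 0 else if ~~ A && ~~ B then 1 else 2.

Lemma pw1 (A B1 B2 : bool) : ~~ (B1 && B2) -> B1 + B2 <= absdiff (ddb A B1) (ddb A B2).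
Proof. by case: A; case: B1; case: B2. Qed.
Lemma pw2 (A1 A2 B : bool) : ~~ (A1 && A2) -> A1 + A2 <= absdiff (ddb A1 B) (ddb A2 B).
Proof. by case: A1; case: A2; case: B. Qed.
Lemma pw3 (A1 A2 B1 B2 : bool) : ~~ (A1 && A2) -> ~~ (B1 && B2) ->
  A1 + A2 + B1 + B2 <= absdiff (ddb A1 B1) (ddb A2 B2) + (A1 && B1) + (A2 && B2)
     + 2 * (A1 && B2) + 2 * (A2 && B1).
Proof. by case: A1; case: A2; case: B1; case: B2. Qed.

Lemma neq2 (j l b : 'I_n) : j != l -> ~~ ((b == j) && (b == l)).
Proof. by move=> jl; apply/negP => /andP [/eqP E1 /eqP E2]; move: jl; rewrite -E1 -E2 eqxx. Qed.

Lemma DzE (i j k l a b : 'I_n) :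
  Delta_z e (a, b) (i, j) (k, l) = absdiff (ddb (a == i) (b == j)) (ddb (a == k) (b == l)).
Proof.
rewrite /Delta_z !gdistE /dd /ddb /KnKn_adj /= !xpair_eqE.
by rewrite (eq_sym i) (eq_sym j) (eq_sym k) (eq_sym l) (eq_sym a i) (eq_sym b j) (eq_sym a k) (eq_sym b l).
Qed.

Lemma sum_eq1 (S : {set T}) x : \sum_(z in S) (z == x : nat) = (x \in S).
Proof.
case: (boolP (x \in S)) => hx.
  rewrite (bigD1 x) //= eqxx big1 // => z /andP [_ /negbTE ->] //.
by rewrite big1 // => z hz; case: eqP => // E; rewrite -E hz in hx.
Qed.

Definition Rc (S : {set T}) (i : 'I_n) := \sum_(z in S) (z.1 == i : nat).
Definition Cc (S : {set T}) (j : 'I_n) := \sum_(z in S) (z.2 == j : nat).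

Lemma wres_crit (S : {set T}) :
  (forall i, 2 <= Rc S i) -> (forall j, 2 <= Cc S j) ->
  (forall i k j l, i != k -> j != l -> (i, j) \in S -> (i, l) \in S -> (k, j) \in S ->
     9 + ((k, l) \in S) <= Rc S i + Rc S k + Cc S j + Cc S l) ->
  weak_resolving e 4 S.
Proof.
move=> HR HC H2.
apply/forallP => [[i j]]; apply/forallP => [[k l]]; apply/implyP => hxy.
rewrite /Delta_S.
case: (eqVneq i k) => [ik|ik].
  subst k.
  have jl : j != l by apply: contraNneq hxy => ->.
  apply: (@leq_trans (Cc S j + Cc S l)); first by have := HC j; have := HC l; lia.
  rewrite /Cc -big_split /=; apply: leq_sum => [[a b]] _.
  by rewrite DzE /=; apply: pw1; apply: neq2.
case: (eqVneq j l) => [jl|jl].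
  subst l.
  apply: (@leq_trans (Rc S i + Rc S k)); first by have := HR i; have := HR k; lia.
  rewrite /Rc -big_split /=; apply: leq_sum => [[a b]] _.
  by rewrite DzE /=; apply: pw2; apply: neq2.
have key : Rc S i + Rc S k + Cc S j + Cc S l <=
   \sum_(z in S) Delta_z e z (i, j) (k, l) + ((i, j) \in S) + ((k, l) \in S)
     + 2 * ((i, l) \in S) + 2 * ((k, j) \in S).
  rewrite -!sum_eq1 !big_distrr /Rc /Cc -!big_split /=.
  apply: leq_sum => [[a b]] _.
  rewrite DzE !xpair_eqE /=.
  have := @pw3 (a == i) (a == k) (b == j) (b == l) (neq2 _ ik) (neq2 _ jl).
  by [].
have h8 : 8 <= Rc S i + Rc S k + Cc S j + Cc S l.
  by have := HR i; have := HR k; have := HC j; have := HC l; lia.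
move: key h8.
set D := (\sum_(z in S) _).
case: (boolP ((i, l) \in S)) => il; case: (boolP ((k, j) \in S)) => kj;
case: (boolP ((i, j) \in S)) => x; case: (boolP ((k, l) \in S)) => y /=; try (move=> *; lia).
- have := H2 _ _ _ _ ik jl x il kj; rewrite y /=; move=> *; lia.
- have := H2 _ _ _ _ ik jl x il kj; rewrite (negbTE y) /=; move=> *; lia.
- have ki : k != i by rewrite eq_sym.
  have lj : l != j by rewrite eq_sym.
  have := H2 _ _ _ _ ki lj y kj il; rewrite (negbTE x) /=; move=> *; lia.
Qed.
End G.

Definition pat (s : nat) : seq (nat * nat) :=
  match s with
  | 4 => [:: (0,1);(0,2);(0,3);(1,0);(2,0);(3,0);(1,1);(2,2);(3,3)]
  | 5 => [:: (0,1);(0,2);(0,3);(0,4);(1,0);(2,0);(3,0);(4,0);(1,1);(2,2);(3,3);(4,4)]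
  | 6 => [:: (0, 1); (0, 2); (0, 5); (1, 0); (1, 4); (2, 1); (2, 4); (3, 2); (3, 5); (4, 0); (4, 3); (4, 4); (5, 3); (5, 5)]
  | _ => [:: (0, 3); (0, 4); (1, 3); (1, 5); (2, 0); (2, 6); (3, 1); (3, 2); (4, 4); (4, 5); (5, 2); (5, 5); (5, 6); (6, 0); (6, 1); (6, 4)]
  end.

Definition P (s u v : nat) : bool := (u, v) \in pat s.
Definition rcP s u := count (fun v => P s u v) (iota 0 s).
Definition ccP s v := count (fun u => P s u v) (iota 0 s).

Definition PC (s : nat) : bool :=
  all (fun u => 2 <= rcP s u) (iota 0 s) && all (fun v => 2 <= ccP s v) (iota 0 s) &&
  all (fun u => all (fun w => all (fun v => all (fun x =>
     (u != w) ==> (v != x) ==> P s u v ==> P s u x ==> P s w v ==>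
       (9 + P s w x <= rcP s u + rcP s w + ccP s v + ccP s x)) (iota 0 s)) (iota 0 s)) (iota 0 s)) (iota 0 s).

Lemma PC4 : PC 4. Proof. by vm_compute. Qed.
Lemma PC5 : PC 5. Proof. by vm_compute. Qed.
Lemma PC6 : PC 6. Proof. by vm_compute. Qed.
Lemma PC7 : PC 7. Proof. by vm_compute. Qed.
Lemma size_pat s : 4 <= s <= 7 -> \sum_(0 <= u < s) rcP s u <= 2 * s + 2.
Proof. move=> hs; have : (s == 4) || (s == 5) || (s == 6) || (s == 7) by lia.
by case/orP => [/orP [/orP [] | ] | ] /eqP ->; rewrite unlock. Qed.
Lemma sum_rc4 : \sum_(0 <= u < 4) rcP 4 u = 9.
Proof. by rewrite unlock. Qed.

Lemma PC_ok s : 4 <= s <= 7 ->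
  [/\ forall u, u < s -> 2 <= rcP s u, forall v, v < s -> 2 <= ccP s v &
   forall u w v x, u < s -> w < s -> v < s -> x < s -> u != w -> v != x ->
     P s u v -> P s u x -> P s w v ->  9 + P s w x <= rcP s u + rcP s w + ccP s v + ccP s x].
Proof.
move=> hs.
have : PC s.
  have : (s == 4) || (s == 5) || (s == 6) || (s == 7) by lia.
  by case/orP => [/orP [/orP [] | ] | ] /eqP ->; [exact PC4|exact PC5|exact PC6|exact PC7].
case/andP => /andP [/allP A1 /allP A2] /allP A3; split.
- by move=> u hu; apply: A1; rewrite mem_iota.
- by move=> v hv; apply: A2; rewrite mem_iota.
move=> u w v x hu hw hv hx uw vx h1 h2 h3.
have := A3 u; rewrite mem_iota hu => /(_ isT) /allP /(_ w); rewrite mem_iota hw => /(_ isT).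
move=> /allP /(_ v); rewrite mem_iota hv => /(_ isT) /allP /(_ x); rewrite mem_iota hx => /(_ isT).
by rewrite uw vx h1 h2 h3.
Qed.

Section B.
Variable n : nat.
Hypothesis hn : 9 <= n.
Definition s0 := 4 + n %% 4.
Definition mm := n - s0.
Definition bo i := if i < mm then 4 * (i %/ 4) else mm.
Definition bs i := if i < mm then 4 else s0.

Lemma bo_le i : i < n -> bo i <= i < bo i + bs i /\ bo i + bs i <= n.
Proof. rewrite /bo /bs; case: (ltnP i mm) => h hi; rewrite /mm /s0 in h *; lia. Qed.

Lemma bo_shift i v : i < n -> v < bs i -> bo (bo i + v) = bo i /\ bs (bo i + v) = bs i.
Proof.
rewrite /bo /bs; case: (ltnP i mm) => h hi hv.
  have h1 : 4 * (i %/ 4) + v < mm by rewrite /mm /s0 in h *; lia.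
  rewrite h1; split => //. rewrite /mm /s0 in h h1 *; lia.
have h1 : mm + v < mm = false by rewrite /mm /s0 in h *; lia.
by rewrite h1.
Qed.

Lemma bo_eq i j : i < n -> j < n -> bo i = bo j -> bs i = bs j.
Proof.
rewrite /bo /bs; case: (ltnP i mm); case: (ltnP j mm) => // h1 h2 hi hj; rewrite /mm /s0 in h1 h2 *; lia.
Qed.

Lemma bs_range i : 4 <= bs i <= 7.
Proof. rewrite /bs; case: (i < mm); rewrite /s0; lia. Qed.
End B.

Lemma window (f : nat -> nat) o s N : o + s <= N ->
  (forall j, j < N -> (j < o) || (o + s <= j) -> f j = 0) ->
  \sum_(0 <= j < N) f j = \sum_(0 <= v < s) f (o + v).
Proof.
move=> hN hf.
rewrite (@big_cat_nat _ _ _ o) //; last lia.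
rewrite (@big_cat_nat _ _ _ (o + s) o) //; last lia.
have E1 : \sum_(0 <= j < o) f j = 0.
  rewrite big_nat_cond big1 // => j /andP [/andP [_ hj] _]; apply: hf; lia.
have E2 : \sum_(o + s <= j < N) f j = 0.
  rewrite big_nat_cond big1 // => j /andP [/andP [hj1 hj2] _]; apply: hf; lia.
rewrite E1 E2 /= add0n addn0 -{1}(add0n o) big_addn (addKn o s).
by apply: eq_bigr => v _; rewrite addnC.
Qed.
Lemma sum_count (p : pred nat) s : \sum_(0 <= v < s) (p v : nat) = count p (iota 0 s).
Proof. by rewrite /index_iota subn0; elim: (iota 0 s) => [|x r IH]; rewrite ?big_nil ?big_cons //= IH. Qed.

Section Main.
Variable n : nat.
Hypothesis hn : 9 <= n.

Definition Snat (i j : nat) : bool := (bo n i == bo n j) && P (bs n i) (i - bo n i) (j - bo n j).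
Definition Sset : {set 'I_n * 'I_n} := [set z : 'I_n * 'I_n | Snat z.1 z.2].

Lemma Rc_sum (i : 'I_n) : @Rc n Sset i = \sum_(j < n) Snat i j.
Proof.
rewrite /Rc big_mkcond /=.
rewrite (eq_bigr (fun z => (fun a b => if (a, b) \in Sset then (a == i : nat) else 0) z.1 z.2)); last by case.
rewrite -(pair_bigA _ (fun a b => if (a, b) \in Sset then (a == i : nat) else 0)) /=.
rewrite (bigD1 i) //=.
have -> : \sum_(a < n | a != i) \sum_(b < n) (if (a,b) \in Sset then (a == i : nat) else 0) = 0.
  by apply: big1 => a /negbTE ai; apply: big1 => b _; rewrite ai; case: ifP.
by rewrite addn0; apply: eq_bigr => b _; rewrite inE eqxx /=; case: (Snat _ _).
Qed.

Lemma Cc_sum (j : 'I_n) : @Cc n Sset j = \sum_(i < n) Snat i j.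
Proof.
rewrite /Cc big_mkcond /=.
rewrite (eq_bigr (fun z => (fun a b => if (a, b) \in Sset then (b == j : nat) else 0) z.1 z.2)); last by case.
rewrite -(pair_bigA _ (fun a b => if (a, b) \in Sset then (b == j : nat) else 0)) /=.
rewrite exchange_big (bigD1 j) //=.
have -> : \sum_(b < n | b != j) \sum_(a < n) (if (a,b) \in Sset then (b == j : nat) else 0) = 0.
  by apply: big1 => b /negbTE bj; apply: big1 => a _; rewrite bj; case: ifP.
by rewrite addn0; apply: eq_bigr => a _; rewrite inE eqxx /=; case: (Snat _ _).
Qed.

Lemma RcE (i : 'I_n) : @Rc n Sset i = rcP (bs n i) (i - bo n i).
Proof.
rewrite Rc_sum -(big_mkord xpredT (fun j => (Snat i j : nat))).
have [/andP [h1 h2] h3] := bo_le hn (ltn_ord i).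
rewrite (@window _ (bo n i) (bs n i)) //; last first.
  move=> j hj hj'; rewrite /Snat; case: eqP => //= E.
  have [/andP [g1 g2] g3] := bo_le hn hj.
  have := bo_eq hn (ltn_ord i) hj E. lia.
rewrite /rcP -sum_count; apply: eq_big_nat => v /andP [_ hv].
have [E1 E2] := bo_shift hn (ltn_ord i) hv.
by rewrite /Snat E1 eqxx /= addKn.
Qed.

Lemma CcE (j : 'I_n) : @Cc n Sset j = ccP (bs n j) (j - bo n j).
Proof.
rewrite Cc_sum -(big_mkord xpredT (fun i => (Snat i j : nat))).
have [/andP [h1 h2] h3] := bo_le hn (ltn_ord j).
rewrite (@window _ (bo n j) (bs n j)) //; last first.
  move=> i hi hi'; rewrite /Snat; case: eqP => //= E.
  have [/andP [g1 g2] g3] := bo_le hn hi.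
  have := bo_eq hn hi (ltn_ord j) E. lia.
rewrite /ccP -sum_count; apply: eq_big_nat => v /andP [_ hv].
have [E1 E2] := bo_shift hn (ltn_ord j) hv.
by rewrite /Snat E1 E2 eqxx /= addKn.
Qed.

Lemma Sres : weak_resolving (@KnKn_adj n) 4 Sset.
Proof.
have hn2 : 2 < n by lia.
apply: (wres_crit hn2).
- move=> i; rewrite RcE.
  have [/andP [h1 h2] _] := bo_le hn (ltn_ord i).
  have [A _ _] := PC_ok (bs_range hn i); apply: A; lia.
- move=> j; rewrite CcE.
  have [/andP [h1 h2] _] := bo_le hn (ltn_ord j).
  have [_ A _] := PC_ok (bs_range hn j); apply: A; lia.
move=> i k j l ik jl; rewrite !inE /Snat /=.
case/andP => /eqP Eij Pij; case/andP => /eqP Eil Pil; case/andP => /eqP Ekj Pkj.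
rewrite !RcE !CcE.
have Bj := bo_eq hn (ltn_ord i) (ltn_ord j) Eij.
have Bl := bo_eq hn (ltn_ord i) (ltn_ord l) Eil.
have Bk := bo_eq hn (ltn_ord k) (ltn_ord j) Ekj.
have [/andP [i1 i2] _] := bo_le hn (ltn_ord i).
have [/andP [j1 j2] _] := bo_le hn (ltn_ord j).
have [/andP [k1 k2] _] := bo_le hn (ltn_ord k).
have [/andP [l1 l2] _] := bo_le hn (ltn_ord l).
rewrite -Eij in Ekj j1 j2 Pij Pkj *.
rewrite -Eil in l1 l2 Pil *.
rewrite -Bj in Bk j2 *. rewrite -Bl in l2 *. rewrite Bk in k2 Pkj *.
rewrite Ekj in k1 k2 Pkj *.
have [_ _ A] := PC_ok (bs_range hn i).
have ik' : (i : nat) - bo n i != k - bo n i.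
  move: ik; rewrite -(inj_eq val_inj) /= => ik; lia.
have jl' : (j : nat) - bo n i != l - bo n i.
  move: jl; rewrite -(inj_eq val_inj) /= => jl; lia.
rewrite eqxx /=.
apply: A => //. all: lia.
Qed.

Definition g (i : nat) := rcP (bs n i) (i - bo n i).

Lemma card_sum : #|Sset| = \sum_(0 <= i < n) g i.
Proof.
rewrite big_mkord -sum1_card.
rewrite (eq_bigr (fun i : 'I_n => @Rc n Sset i)); last by move=> i _; rewrite RcE.
rewrite /Rc exchange_big /=; apply: eq_bigr => z _.
rewrite (bigD1 z.1) //= eqxx big1 // => i /negbTE; rewrite eq_sym => -> //.
Qed.

Lemma sum_low q : 4 * q <= mm n -> \sum_(0 <= i < 4 * q) g i = 9 * q.
Proof.
elim: q => [|q IH] hq; first by rewrite big_geq.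
rewrite (@big_cat_nat _ _ _ (4 * q)) //=; last lia.
rewrite IH; last lia.
have -> : 4 * q.+1 = 4 * q + 4 by lia.
rewrite -{1}(add0n (4 * q)) big_addn (addKn (4 * q)).
rewrite (eq_big_nat _ _ (F2 := fun v => rcP 4 v)) ?sum_rc4; first lia.
move=> v /andP [_ hv]; rewrite /g /bo /bs.
have h : v + 4 * q < mm n by lia.
rewrite h; congr rcP; lia.
Qed.

Lemma card_bound : #|Sset| <= 2 * n + 1 + n %/ 4.
Proof.
rewrite card_sum.
have hm : mm n <= n by rewrite /mm; lia.
rewrite (@big_cat_nat _ _ _ (mm n)) //=.
have h4 : mm n = 4 * (mm n %/ 4) by rewrite /mm /s0; lia.
rewrite {1}h4 sum_low -?h4 //.
have hs : n - mm n = s0 n by rewrite /mm /s0; lia.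
have E : \sum_(mm n <= i < n) g i = \sum_(0 <= v < s0 n) rcP (s0 n) v.
  rewrite -{1}(add0n (mm n)) big_addn hs.
  apply: eq_big_nat => v /andP [_ hv]; rewrite /g /bo /bs.
  have h : v + mm n < mm n = false by lia.
  by rewrite h addnK.
rewrite E.
have := @size_pat (s0 n); rewrite /s0 in hs h4 *.
move=> H; have := H ltac:(lia). rewrite /mm /s0 in h4 *. lia.
Qed.
End Main.

Theorem mainTheorem5 (n : nat) (hn : 9 <= n) :
  @wdim _ (@KnKn_adj n) 4 <= 2 * n + 1 + n %/ 4.
Proof.
apply: leq_trans (card_bound hn).
rewrite /wdim.
have := @bigmin_le _ (index_enum {set 'I_n * 'I_n}) (fun S => weak_resolving (@KnKn_adj n) 4 S)
  (fun S => #|S|) #|{: 'I_n * 'I_n}|.+1 (Sset n).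
rewrite mem_index_enum; apply => //.
exact: Sres.
Qed.
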